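(* Let $M>0$, $0\le a<M$, $r_+=M+\sqrt{M^2-a^2}$ and $\Delta(r)=r^2-2Mr+a^2$. For $\mathcal{Q}\ge 0$ and $r>r_+$ define $$V_{\pm}(r,\mathcal Q)=\frac{2Mar\pm\sqrt{r\Delta(r)\big((1+\mathcal Q)r^3+a^2\mathcal Q(r+2M)\big)}}{r\,[\,r(r^2+a^2)+2Ma^2\,]}.$$ Then for every fixed $\mathcal Q\ge 0$, each of the functions $r\mapsto V_+(r,\mathcal Q)$ and $r\mapsto V_-(r,\mathcal Q)$ has exactly one local extremum in the interval $(r_+,\infty)$.
   Context: These are the ''pseudo potentials'' for null geodesics in the exterior of a sub-extremal Kerr spacetime in Boyer–Lindquist coordinates. For a null geodesic with $L_z\neq0$, set $\mathcal E=E/L_z$ and $\mathcal Q=Q/L_z^2$, where $E$ is the energy, $L_z$ the axial angular momentum and $Q=K-(aE-L_z)^2$ with $K$ Carter's constant. The radial function $R(r)=((r^2+a^2)E-aL_z)^2-\Delta(r)K$ satisfies $R=L_z^2\, r[r(r^2+a^2)+2Ma^2](\mathcal E-V_+(r,\mathcal Q))(\mathcal E-V_-(r,\mathcal Q))$, so $V_\pm(r,\mathcal Q)$ are the two values of $\mathcal E$ for which $r$ is a radial turning point. *)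

(* Defs.v *)
From Stdlib Require Import Reals.
Open Scope R_scope.

Definition Delta (M a r : R) : R := r ^ 2 - 2 * M * r + a ^ 2.

Definition rplus (M a : R) : R := M + sqrt (M ^ 2 - a ^ 2).

Definition Vroot (M a Q r : R) : R :=
  sqrt (r * Delta M a r * ((1 + Q) * r ^ 3 + a ^ 2 * Q * (r + 2 * M))).

Definition Vden (M a r : R) : R := r * (r * (r ^ 2 + a ^ 2) + 2 * M * a ^ 2).

Definition Vplus (M a Q r : R) : R := (2 * M * a * r + Vroot M a Q r) / Vden M a r.
Definition Vminus (M a Q r : R) : R := (2 * M * a * r - Vroot M a Q r) / Vden M a r.

Definition local_extremum_on (f : R -> R) (lo x : R) : Prop :=
  lo < x /\
  exists eps : R, 0 < eps /\
    ((forall y, lo < y -> Rabs (y - x) < eps -> f y <= f x) \/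
     (forall y, lo < y -> Rabs (y - x) < eps -> f x <= f y)).

(* Main.v *)
Require Import Defs.
From Stdlib Require Import Reals Lra Psatz.
From Coquelicot Require Import Coquelicot.
Open Scope R_scope.

Definition FF (M a Q r : R) : R :=
  r * Defs.Delta M a r * ((1 + Q) * r ^ 3 + a ^ 2 * Q * (r + 2 * M)).
Definition Dn1 (M a r : R) : R := 4 * r ^ 3 + 2 * a ^ 2 * r + 2 * M * a ^ 2.
Definition al (M a r : R) : R := 4 * M * a * r ^ 2 * (3 * r ^ 2 + a ^ 2).
Definition Cc (M a Q r : R) : R :=
  Dn1 M a r * (a ^ 2 - (1 + Q) * Defs.Delta M a r) + 2 * (1 + Q) * (r - M) * Vden M a r.
Definition phip (M a Q r : R) : R := Cc M a Q r - al M a r * Vplus M a Q r.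
Definition phim (M a Q r : R) : R := al M a r * Vminus M a Q r - Cc M a Q r.
Definition pp (M a r : R) : R := - (r ^ 3 - 3 * M * r ^ 2 + a ^ 2 * r + M * a ^ 2).
Definition Hh (M a r : R) : R := r ^ 3 * (4 * M * a ^ 2 - r * (r - 3 * M) ^ 2).
Definition Gg (M a Q r : R) : R := Hh M a r - Q * pp M a r ^ 2.
Definition Kk (M a Q r : R) : R :=
  -4 * ((1 + Q) * r ^ 8 + (1 + 3 * Q) * a ^ 2 * r ^ 6 + 2 * (1 + Q) * M * a ^ 2 * r ^ 5
        + 3 * Q * a ^ 4 * r ^ 4 + 4 * Q * M * a ^ 4 * r ^ 3 + Q * a ^ 6 * r ^ 2
        + 2 * Q * M * a ^ 6 * r).

Lemma Vroot_FF M a Q r : Vroot M a Q r = sqrt (FF M a Q r).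
Proof. reflexivity. Qed.

Lemma sum_id M a Q r : Vden M a r <> 0 ->
  phip M a Q r + phim M a Q r = - (2 * al M a r * Vroot M a Q r / Vden M a r).
Proof. intros H. unfold phip, phim, Vplus, Vminus. field. exact H. Qed.

Lemma prod_id M a Q r : 0 <= FF M a Q r -> Vden M a r <> 0 ->
  phip M a Q r * phim M a Q r = - Kk M a Q r * Gg M a Q r / Vden M a r.
Proof.
  intros HF HD.
  assert (HS : Vroot M a Q r * Vroot M a Q r = FF M a Q r) by (apply sqrt_sqrt; exact HF).
  set (S := Vroot M a Q r) in *.
  assert (E : phip M a Q r * phim M a Q r =
     - Kk M a Q r * Gg M a Q r / Vden M a r
     - al M a r ^ 2 * (FF M a Q r - S * S) / Vden M a r ^ 2).
  { unfold phip, phim, Vplus, Vminus. fold S.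
    unfold Kk, Gg, Hh, pp, FF, al, Cc, Dn1, Vden, Defs.Delta in *. field.
    unfold Vden in HD. split; intro Hc; apply HD; rewrite Hc; ring. }
  rewrite E, HS. field. exact HD.
Qed.

Ltac norm_sqrt M a Q x :=
  repeat match goal with |- context [sqrt ?u] =>
    progress (replace u with (FF M a Q x) by (unfold FF, Defs.Delta; ring)) end.

Lemma deriv_pm M a Q x (sg : R) : (sg = 1 \/ sg = -1) -> 0 < FF M a Q x -> Vden M a x <> 0 ->
  derivable_pt_lim (fun s => (2 * M * a * s + sg * Vroot M a Q s) / Vden M a s) x
    ((sg * Cc M a Q x - sg * al M a x * ((2 * M * a * x + sg * Vroot M a Q x) / Vden M a x))
      / (2 * Vroot M a Q x * Vden M a x)).
Proof.
  intros Hsg HF HD. apply is_derive_Reals.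
  unfold Vroot, Vden, FF, Defs.Delta in *.
  auto_derive.
  - split; [exact HF|]. split; [exact HD| exact I].
  - idtac.  norm_sqrt M a Q x. 
    assert (HS : sqrt (FF M a Q x) * sqrt (FF M a Q x) = FF M a Q x) by (apply sqrt_sqrt; unfold FF, Defs.Delta; lra).
    assert (HS0 : 0 < sqrt (FF M a Q x)) by (apply sqrt_lt_R0; unfold FF, Defs.Delta; lra).
    set (S := sqrt (FF M a Q x)) in *.
    match goal with |- ?L = ?R =>
      assert (E : L - R = - sg * Dn1 M a x * (S * S - FF M a Q x) / (S * Vden M a x ^ 2)) end.
    { unfold Cc, al, Dn1, FF, Vden, Defs.Delta in *.
      destruct Hsg as [-> | ->]; field; repeat split; try lra; intro Hc; apply HD; rewrite Hc; ring. }
    rewrite HS in E. lra.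
Qed.

Lemma mvt_pos (f f' : R -> R) lo d x y :
  (forall z, lo < z -> derivable_pt_lim f z (f' z)) ->
  lo < x -> x < y -> (forall z, x < z < y -> z <> d -> 0 < f' z) -> f x < f y.
Proof.
  intros Hd Hx Hxy Hp.
  assert (G : forall u v, x <= u -> u < v -> v <= y -> ~ (u < d < v) -> f u < f v).
  { intros u v Hu Huv Hv Hn.
    destruct (MVT_cor2 f f' u v Huv) as [z [Ez Hz]].
    { intros z Hz. apply Hd. lra. }
    assert (0 < f' z).
    { apply Hp. lra. intro E. subst z. apply Hn. lra. }
    assert (0 < f' z * (v - u)) by (apply Rmult_lt_0_compat; lra). lra. }
  destruct (Rlt_dec x d) as [H1|H1]; destruct (Rlt_dec d y) as [H2|H2].
  - assert (f x < f d) by (apply G; lra).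
    assert (f d < f y) by (apply G; lra). lra.
  - apply G; lra.
  - apply G; lra.
  - apply G; lra.
Qed.

Lemma mvt_neg (f f' : R -> R) lo d x y :
  (forall z, lo < z -> derivable_pt_lim f z (f' z)) ->
  lo < x -> x < y -> (forall z, x < z < y -> z <> d -> f' z < 0) -> f y < f x.
Proof.
  intros Hd Hx Hxy Hp.
  assert (- f x < - f y); [|lra].
  apply (mvt_pos (fun z => - f z) (fun z => - f' z) lo d x y); auto.
  - intros z Hz. apply derivable_pt_lim_opp. auto.
  - intros z Hz Hzd. specialize (Hp z Hz Hzd). lra.
Qed.

Lemma uniq_ext (f f' : R -> R) lo c d :
  lo < c ->
  (forall x, lo < x -> derivable_pt_lim f x (f' x)) ->
  (forall x, lo < x -> x < c -> x <> d -> 0 < f' x) ->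
  (forall x, c < x -> x <> d -> f' x < 0) ->
  exists! r, local_extremum_on f lo r.
Proof.
  intros Hc Hd Hl Hr.
  assert (Inc : forall x y, lo < x -> x < y -> y <= c -> f x < f y).
  { intros x y Hx Hxy Hy. apply (mvt_pos f f' lo d x y Hd Hx Hxy).
    intros z Hz Hzd. apply Hl; lra. }
  assert (Dec : forall x y, c <= x -> x < y -> f y < f x).
  { intros x y Hx Hxy. apply (mvt_neg f f' lo d x y Hd); try lra.
    intros z Hz Hzd. apply Hr; lra. }
  exists c. split.
  - split; [exact Hc|]. exists 1. split; [lra|]. left.
    intros y Hy _. destruct (Rtotal_order y c) as [H|[H|H]].
    + left. apply Inc; lra.
    + subst; lra.
    + left. apply Dec; lra.
  - intros r [Hr0 [eps [Heps Hopt]]].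
    destruct (Rtotal_order r c) as [H|[H|H]]; [exfalso| auto| exfalso].
    + set (del := Rmin eps (Rmin (r - lo) (c - r)) / 2).
      assert (Hd1 : 0 < del).
      { unfold del. apply Rmin_case; [lra|]. apply Rmin_case; lra. }
      assert (Hd2 : del < eps).
      { unfold del. assert (Rmin eps (Rmin (r - lo) (c - r)) <= eps) by apply Rmin_l. lra. }
      assert (Hd3 : del < r - lo /\ del < c - r).
      { unfold del. assert (Rmin eps (Rmin (r - lo) (c - r)) <= Rmin (r - lo) (c - r)) by apply Rmin_r.
        assert (Rmin (r - lo) (c - r) <= r - lo) by apply Rmin_l.
        assert (Rmin (r - lo) (c - r) <= c - r) by apply Rmin_r. lra. }
      assert (A1 : f (r - del) < f r) by (apply Inc; lra).
      assert (A2 : f r < f (r + del)) by (apply Inc; lra).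
      destruct Hopt as [Ho|Ho].
      * assert (f (r + del) <= f r) by (apply Ho; [lra| rewrite Rabs_right; lra]). lra.
      * assert (f r <= f (r - del)) by (apply Ho; [lra| rewrite Rabs_left; lra]). lra.
    + set (del := Rmin eps (r - c) / 2).
      assert (Hd1 : 0 < del).
      { unfold del. apply Rmin_case; lra. }
      assert (Hd2 : del < eps /\ del < r - c).
      { unfold del. assert (Rmin eps (r - c) <= eps) by apply Rmin_l.
        assert (Rmin eps (r - c) <= r - c) by apply Rmin_r. lra. }
      assert (A1 : f r < f (r - del)) by (apply Dec; lra).
      assert (A2 : f (r + del) < f r) by (apply Dec; lra).
      destruct Hopt as [Ho|Ho].
      * assert (f (r - del) <= f r) by (apply Ho; [lra| rewrite Rabs_left; lra]). lra.
      * assert (f r <= f (r + del)) by (apply Ho; [lra| rewrite Rabs_right; lra]). lra.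
Qed.

Lemma uniq_ext_neg (f f' : R -> R) lo c d :
  lo < c ->
  (forall x, lo < x -> derivable_pt_lim f x (f' x)) ->
  (forall x, lo < x -> x < c -> x <> d -> f' x < 0) ->
  (forall x, c < x -> x <> d -> 0 < f' x) ->
  exists! r, local_extremum_on f lo r.
Proof.
  intros Hc Hd Hl Hr.
  destruct (uniq_ext (fun x => - f x) (fun x => - f' x) lo c d Hc) as [r [Hr1 Hr2]].
  - intros x Hx. apply derivable_pt_lim_opp. auto.
  - intros x H1 H2 H3. specialize (Hl x H1 H2 H3). lra.
  - intros x H1 H2. specialize (Hr x H1 H2). lra.
  - assert (EQ : forall r, local_extremum_on (fun x => - f x) lo r <-> local_extremum_on f lo r).
    { intros r0. unfold local_extremum_on. split; intros [H0 [e [He Ho]]]; split; auto; exists e; split; auto;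
      destruct Ho as [Ho|Ho]; [right|left|right|left]; intros y Hy1 Hy2; specialize (Ho y Hy1 Hy2); lra. }
    exists r. split. apply EQ; auto. intros r' Hr'. apply Hr2. apply EQ; auto.
Qed.

Lemma cont_pp M a x : continuity_pt (fun r => pp M a r) x.
Proof. unfold pp. reg. Qed.
Lemma cont_Gg M a Q x : continuity_pt (fun r => Gg M a Q r) x.
Proof. unfold Gg, Hh, pp. reg. Qed.

Lemma concav M a x y z :
  (z - x) * pp M a y - (z - y) * pp M a x - (y - x) * pp M a z
  = (y - x) * (z - y) * (z - x) * (x + y + z - 3 * M).
Proof. unfold pp. ring. Qed.

Section S.
Variables (M a Q : R).
Hypotheses (hM : 0 < M) (ha0 : 0 <= a) (haM : a < M) (hQ : 0 <= Q).

Lemma rp_facts : M < rplus M a /\ rplus M a <= 2 * M /\ Defs.Delta M a (rplus M a) = 0.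
Proof.
  unfold rplus, Defs.Delta.
  assert (H0 : 0 < M ^ 2 - a ^ 2) by nra.
  pose proof (sqrt_lt_R0 _ H0) as H1.
  pose proof (sqrt_sqrt _ (Rlt_le _ _ H0)) as H2.
  set (s := sqrt (M ^ 2 - a ^ 2)) in *.
  split; [lra|]. split; [nra|]. nra.
Qed.

Lemma Delta_pos x : rplus M a < x -> 0 < Defs.Delta M a x.
Proof.
  intros Hx. unfold rplus, Defs.Delta in *.
  assert (H0 : 0 <= M ^ 2 - a ^ 2) by nra.
  pose proof (sqrt_pos (M ^ 2 - a ^ 2)) as H1.
  pose proof (sqrt_sqrt _ H0) as H2.
  set (s := sqrt (M ^ 2 - a ^ 2)) in *. nra.
Qed.


Lemma Vden_pos x : 0 < x -> 0 < Vden M a x.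
Proof. intros Hx. unfold Vden. apply Rmult_lt_0_compat; [lra|].
  assert (0 <= a ^ 2) by (apply pow2_ge_0). assert (0 < x ^ 2) by (apply pow_lt; lra).
  assert (0 < x * (x ^ 2 + a ^ 2)) by (apply Rmult_lt_0_compat; lra).
  assert (0 <= M * a ^ 2) by (apply Rmult_le_pos; lra). lra. Qed.

Lemma PP_pos x : 0 < x -> 0 < (1 + Q) * x ^ 3 + a ^ 2 * Q * (x + 2 * M).
Proof. intros Hx. assert (0 < x ^ 3) by (apply pow_lt; lra).
  assert (0 <= Q * x ^ 3) by (apply Rmult_le_pos; lra).
  assert (0 <= a ^ 2) by (apply pow2_ge_0).
  assert (0 <= a ^ 2 * Q * (x + 2 * M)) by (repeat apply Rmult_le_pos; lra). nra. Qed.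

Lemma FF_pos x : rplus M a < x -> 0 < FF M a Q x.
Proof.
  intros Hx. destruct rp_facts as [H1 [H2 H3]]. pose proof (Delta_pos x Hx).
  pose proof (PP_pos x ltac:(lra)). unfold FF.
  apply Rmult_lt_0_compat; [apply Rmult_lt_0_compat|]; lra.
Qed.

Lemma FF_rp : FF M a Q (rplus M a) = 0.
Proof. destruct rp_facts as [H1 [H2 H3]]. unfold FF. rewrite H3. ring. Qed.

Lemma pp_id x : pp M a x = M * (x ^ 2 - a ^ 2) - x * Defs.Delta M a x.
Proof. unfold pp, Defs.Delta. ring. Qed.

Lemma pp_rp : 0 < pp M a (rplus M a).
Proof.
  destruct rp_facts as [H1 [H2 H3]]. rewrite pp_id, H3.
  set (r := rplus M a) in *.
  assert (a ^ 2 < r ^ 2) by (simpl; nra).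
  assert (0 < M * (r ^ 2 - a ^ 2)) by (apply Rmult_lt_0_compat; lra). lra.
Qed.

Lemma pp_root : 0 < a -> exists rpp, rplus M a < rpp < 3 * M /\ pp M a rpp = 0 /\ (forall x, rplus M a <= x < rpp -> 0 < pp M a x) /\ (forall x, rpp < x -> pp M a x < 0).
Proof.
  intros ha. destruct rp_facts as [H1 [H2 H3]].
  pose proof pp_rp as Hp0.
  assert (Hp3 : pp M a (3 * M) < 0) by (unfold pp; assert (0 < M * a ^ 2) by (apply Rmult_lt_0_compat; [lra| apply pow_lt; lra]); nra).
  destruct (Ranalysis5.IVT_interv (fun r => - pp M a r) (rplus M a) (3 * M)) as [z [Hz Ez]].
  - intros x _. apply continuity_pt_opp. apply cont_pp.
  - lra.
  - lra.
  - lra.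
  - assert (Ez' : pp M a z = 0) by lra.
    assert (Hz1 : rplus M a < z) by (destruct (Req_dec z (rplus M a)) as [E|E]; [subst; lra| lra]).
    assert (Hz2 : z < 3 * M) by (destruct (Req_dec z (3 * M)) as [E|E]; [subst; lra| lra]).
    exists z. split; [lra|]. split; [exact Ez'|]. split.
    + intros x Hx. destruct (Req_dec x (rplus M a)) as [E|E]; [subst; lra|].
      pose proof (concav M a (rplus M a) x z) as C. rewrite Ez' in C.
      assert (0 < (x - rplus M a) * (z - x) * (z - rplus M a) * (rplus M a + x + z - 3 * M)).
      { repeat apply Rmult_lt_0_compat; lra. }
      assert (0 < (z - x) * pp M a (rplus M a)) by (apply Rmult_lt_0_compat; lra).
      assert (0 < (z - rplus M a) * pp M a x) by nra.
      nra.
    + intros x Hx.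
      pose proof (concav M a (rplus M a) z x) as C. rewrite Ez' in C.
      assert (0 < (z - rplus M a) * (x - z) * (x - rplus M a) * (rplus M a + z + x - 3 * M)).
      { repeat apply Rmult_lt_0_compat; lra. }
      assert (0 < (x - z) * pp M a (rplus M a)) by (apply Rmult_lt_0_compat; lra).
      nra.
Qed.

End S.

Definition Fq (M a r : R) := Hh M a r / pp M a r ^ 2.
Definition kk (M a r : R) := r ^ 4 - 6 * M ^ 2 * r ^ 2 + 9 * M ^ 3 * r - M * a ^ 2 * r - 3 * M ^ 2 * a ^ 2.

Lemma Fq_deriv M a x : pp M a x <> 0 ->
  derivable_pt_lim (Fq M a) x (4 * a ^ 2 * x ^ 2 * kk M a x / pp M a x ^ 3).
Proof.
  intros Hp. apply is_derive_Reals. unfold Fq, Hh, kk. unfold pp in *.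
  auto_derive.
  - intro Hc. apply Hp.
    match goal with H : ?u * (?v * 1) = 0 |- _ =>
      replace v with (- (x ^ 3 - 3 * M * x ^ 2 + a ^ 2 * x + M * a ^ 2)) in H by ring;
      replace u with (- (x ^ 3 - 3 * M * x ^ 2 + a ^ 2 * x + M * a ^ 2)) in H by ring end.
    rewrite Rmult_1_r in Hc. apply Rmult_integral in Hc. destruct Hc; auto.
  - field. intro Hc; apply Hp; rewrite Hc; ring.
Qed.

Lemma kk_pos M a x : 0 < M -> 0 <= a -> a < M -> M < x -> 0 < kk M a x.
Proof.
  intros hM ha haM Hx.
  assert (E : kk M a x = (x - M) ^ 3 * (x + 3 * M) + M * (M ^ 2 - a ^ 2) * (x + 3 * M)) by (unfold kk; ring).
  rewrite E.
  assert (0 < (x - M) ^ 3) by (apply pow_lt; lra).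
  assert (0 < M ^ 2 - a ^ 2) by nra.
  assert (0 < (x - M) ^ 3 * (x + 3 * M)) by (apply Rmult_lt_0_compat; lra).
  assert (0 < M * (M ^ 2 - a ^ 2)) by (apply Rmult_lt_0_compat; lra).
  assert (0 < M * (M ^ 2 - a ^ 2) * (x + 3 * M)) by (apply Rmult_lt_0_compat; lra).
  lra.
Qed.

Section G.
Variables (M a Q : R).
Hypotheses (hM : 0 < M) (ha : 0 < a) (haM : a < M) (hQ : 0 <= Q).

Lemma Gg_Fq x : pp M a x <> 0 -> Gg M a Q x = pp M a x ^ 2 * (Fq M a x - Q).
Proof. intros H. unfold Gg, Fq. field. exact H. Qed.

Lemma Hh_id x : Hh M a x = 4 * a ^ 2 * x ^ 2 * Defs.Delta M a x - (x * (x ^ 2 - 3 * M * x + 2 * a ^ 2)) ^ 2.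
Proof. unfold Hh, Defs.Delta. ring. Qed.

Lemma Gg_rp : Gg M a Q (rplus M a) < 0.
Proof.
  destruct (rp_facts M a (Rlt_le _ _ ha) haM) as [H1 [H2 H3]].
  unfold Gg. rewrite Hh_id, H3.
  set (r := rplus M a) in *.
  assert (E : r ^ 2 - 3 * M * r + 2 * a ^ 2 = Defs.Delta M a r - M * r + a ^ 2) by (unfold Defs.Delta; ring).
  rewrite E, H3.
  assert (0 < M * r - a ^ 2) by (simpl; nra).
  assert (0 < r * (0 - M * r + a ^ 2) * (r * (0 - M * r + a ^ 2))).
  { assert (r * (0 - M * r + a ^ 2) < 0) by (apply Ropp_lt_cancel; rewrite Ropp_0;
      replace (- (r * (0 - M * r + a ^ 2))) with (r * (M * r - a ^ 2)) by ring;
      apply Rmult_lt_0_compat; lra). nra. }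
  assert (0 <= Q * pp M a r ^ 2) by (apply Rmult_le_pos; [lra| apply pow2_ge_0]).
  simpl. simpl in *. nra.
Qed.

Lemma Gg_4M : Gg M a Q (4 * M) < 0.
Proof.
  unfold Gg.
  assert (E : Hh M a (4 * M) = 256 * M ^ 4 * (a ^ 2 - M ^ 2)) by (unfold Hh; ring).
  rewrite E.
  assert (0 < M ^ 4) by (apply pow_lt; lra).
  assert (a ^ 2 - M ^ 2 < 0) by nra.
  assert (256 * M ^ 4 * (a ^ 2 - M ^ 2) < 0) by nra.
  assert (0 <= Q * pp M a (4 * M) ^ 2) by (apply Rmult_le_pos; [lra| apply pow2_ge_0]).
  lra.
Qed.

Lemma Hh_rpp x : pp M a x = 0 -> M < x < 3 * M -> 0 < Hh M a x.
Proof.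
  intros Hp Hx.
  assert (E : (x + M) * (4 * M * a ^ 2 - x * (x - 3 * M) ^ 2) =
     x * (3 * M - x) * (x + 3 * M) * (x - M) - 4 * M * pp M a x) by (unfold pp; ring).
  rewrite Hp in E.
  assert (0 < x * (3 * M - x) * (x + 3 * M) * (x - M)) by (repeat apply Rmult_lt_0_compat; lra).
  assert (0 < 4 * M * a ^ 2 - x * (x - 3 * M) ^ 2).
  { apply (Rmult_lt_reg_l (x + M)); [lra|]. rewrite E. lra. }
  unfold Hh. apply Rmult_lt_0_compat; [apply pow_lt; lra| lra].
Qed.

End G.

Section G2.
Variables (M a Q : R).
Hypotheses (hM : 0 < M) (ha : 0 < a) (haM : a < M) (hQ : 0 <= Q).

Lemma Fq_mono_gen x y : M < x -> x < y ->
  (forall z, x <= z <= y -> pp M a z <> 0) ->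
  (forall z, x < z < y -> 0 < pp M a z) \/ (forall z, x < z < y -> pp M a z < 0) ->
  (0 < pp M a x -> Fq M a x < Fq M a y) /\ (pp M a x < 0 -> Fq M a y < Fq M a x).
Proof. Abort.

Lemma Fq_inc x y : M < x -> x < y -> (forall z, x <= z <= y -> 0 < pp M a z) -> Fq M a x < Fq M a y.
Proof.
  intros Hx Hxy Hp.
  destruct (MVT_cor2 (Fq M a) (fun z => 4 * a ^ 2 * z ^ 2 * kk M a z / pp M a z ^ 3) x y Hxy) as [c [Ec Hc]].
  { intros c Hc. apply Fq_deriv. specialize (Hp c Hc). lra. }
  assert (0 < 4 * a ^ 2 * c ^ 2 * kk M a c / pp M a c ^ 3).
  { assert (0 < kk M a c) by (apply kk_pos; lra).
    assert (0 < pp M a c) by (apply Hp; lra).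
    assert (0 < pp M a c ^ 3) by (apply pow_lt; lra).
    assert (0 < a ^ 2) by (apply pow_lt; lra).
    assert (0 < c ^ 2) by (apply pow_lt; lra).
    unfold Rdiv. apply Rmult_lt_0_compat; [|apply Rinv_0_lt_compat; lra].
    repeat apply Rmult_lt_0_compat; lra. }
  assert (0 < 4 * a ^ 2 * c ^ 2 * kk M a c / pp M a c ^ 3 * (y - x)) by (apply Rmult_lt_0_compat; lra).
  lra.
Qed.

Lemma Fq_dec x y : M < x -> x < y -> (forall z, x <= z <= y -> pp M a z < 0) -> Fq M a y < Fq M a x.
Proof.
  intros Hx Hxy Hp.
  destruct (MVT_cor2 (Fq M a) (fun z => 4 * a ^ 2 * z ^ 2 * kk M a z / pp M a z ^ 3) x y Hxy) as [c [Ec Hc]].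
  { intros c Hc. apply Fq_deriv. specialize (Hp c Hc). lra. }
  assert (4 * a ^ 2 * c ^ 2 * kk M a c / pp M a c ^ 3 < 0).
  { assert (0 < kk M a c) by (apply kk_pos; lra).
    assert (pp M a c < 0) by (apply Hp; lra).
    assert (0 < (- pp M a c) ^ 3) by (apply pow_lt; lra).
    assert (E : pp M a c ^ 3 = - (- pp M a c) ^ 3) by ring.
    assert (0 < a ^ 2) by (apply pow_lt; lra).
    assert (0 < c ^ 2) by (apply pow_lt; lra).
    rewrite E. unfold Rdiv. rewrite Rinv_opp.
    assert (0 < 4 * a ^ 2 * c ^ 2 * kk M a c) by (repeat apply Rmult_lt_0_compat; lra).
    assert (0 < / (- pp M a c) ^ 3) by (apply Rinv_0_lt_compat; lra).
    assert (0 < 4 * a ^ 2 * c ^ 2 * kk M a c * / (- pp M a c) ^ 3) by (apply Rmult_lt_0_compat; lra).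
    lra. }
  assert (4 * a ^ 2 * c ^ 2 * kk M a c / pp M a c ^ 3 * (y - x) < 0).
  { assert (0 < - (4 * a ^ 2 * c ^ 2 * kk M a c / pp M a c ^ 3) * (y - x)) by (apply Rmult_lt_0_compat; lra). lra. }
  lra.
Qed.

Lemma G_struct : exists c1 c2, rplus M a < c1 /\ c1 < c2 /\ c2 < 4 * M /\
  (forall x, rplus M a <= x < c1 -> Gg M a Q x < 0) /\
  (forall x, c1 < x < c2 -> 0 < Gg M a Q x) /\
  (forall x, c2 < x -> Gg M a Q x < 0).
Proof.
  destruct (rp_facts M a (Rlt_le _ _ ha) haM) as [H1 [H2 H3]].
  destruct (pp_root M a hM (Rlt_le _ _ ha) haM ha) as [rpp [[Hr1 Hr2] [Hr3 [Hr4 Hr5]]]].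
  pose proof (Gg_rp M a Q hM ha haM hQ) as G0.
  assert (G1 : 0 < Gg M a Q rpp).
  { unfold Gg. rewrite Hr3. pose proof (Hh_rpp M a ha haM rpp Hr3 ltac:(lra)). lra. }
  pose proof (Gg_4M M a Q hM ha haM hQ) as G2.
  destruct (Ranalysis5.IVT_interv (Gg M a Q) (rplus M a) rpp) as [c1 [Hc1 Ec1]].
  { intros; apply cont_Gg. } { lra. } { lra. } { lra. }
  destruct (Ranalysis5.IVT_interv (fun r => - Gg M a Q r) rpp (4 * M)) as [c2 [Hc2 Ec2]].
  { intros; apply continuity_pt_opp, cont_Gg. } { lra. } { lra. } { lra. }
  assert (Ec2' : Gg M a Q c2 = 0) by lra.
  assert (c1a : rplus M a < c1) by (destruct (Req_dec c1 (rplus M a)) as [E|E]; [rewrite E in Ec1; lra| lra]).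
  assert (c1b : c1 < rpp) by (destruct (Req_dec c1 rpp) as [E|E]; [rewrite E in Ec1; lra| lra]).
  assert (c2a : rpp < c2) by (destruct (Req_dec c2 rpp) as [E|E]; [rewrite E in Ec2'; lra| lra]).
  assert (c2b : c2 < 4 * M) by (destruct (Req_dec c2 (4 * M)) as [E|E]; [rewrite E in Ec2'; lra| lra]).
  assert (Fc1 : Fq M a c1 = Q).
  { assert (pp M a c1 <> 0) by (specialize (Hr4 c1 ltac:(lra)); lra).
    rewrite (Gg_Fq M a Q c1 H) in Ec1.
    assert (0 < pp M a c1 ^ 2) by (apply pow_lt; apply Hr4; lra).
    apply Rmult_integral in Ec1. lra. }
  assert (Fc2 : Fq M a c2 = Q).
  { assert (pp M a c2 < 0) by (apply Hr5; lra).
    assert (pp M a c2 <> 0) by lra.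
    rewrite (Gg_Fq M a Q c2 H0) in Ec2'.
    assert (0 < pp M a c2 ^ 2) by (apply pow2_gt_0; lra).
    apply Rmult_integral in Ec2'. lra. }
  exists c1, c2. split; [lra|]. split; [lra|]. split; [lra|]. split; [|split].
  - intros x Hx. assert (0 < pp M a x) by (apply Hr4; lra).
    rewrite (Gg_Fq M a Q x ltac:(lra)).
    assert (0 < pp M a x ^ 2) by (apply pow_lt; lra).
    assert (Fq M a x < Fq M a c1) by (apply Fq_inc; try lra; intros z Hz; apply Hr4; lra).
    assert (0 < pp M a x ^ 2 * (Q - Fq M a x)) by (apply Rmult_lt_0_compat; lra). nra.
  - intros x Hx. destruct (Rtotal_order x rpp) as [Hl|[He|Hg]].
    + assert (0 < pp M a x) by (apply Hr4; lra).
      rewrite (Gg_Fq M a Q x ltac:(lra)).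
      assert (0 < pp M a x ^ 2) by (apply pow_lt; lra).
      assert (Fq M a c1 < Fq M a x) by (apply Fq_inc; try lra; intros z Hz; apply Hr4; lra).
      apply Rmult_lt_0_compat; lra.
    + subst; lra.
    + assert (pp M a x < 0) by (apply Hr5; lra).
      rewrite (Gg_Fq M a Q x ltac:(lra)).
      assert (0 < pp M a x ^ 2) by (apply pow2_gt_0; lra).
      assert (Fq M a c2 < Fq M a x) by (apply Fq_dec; try lra; intros z Hz; apply Hr5; lra).
      apply Rmult_lt_0_compat; lra.
  - intros x Hx. assert (pp M a x < 0) by (apply Hr5; lra).
    rewrite (Gg_Fq M a Q x ltac:(lra)).
    assert (0 < pp M a x ^ 2) by (apply pow2_gt_0; lra).
    assert (Fq M a x < Fq M a c2) by (apply Fq_dec; try lra; intros z Hz; apply Hr5; lra).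
    assert (0 < pp M a x ^ 2 * (Q - Fq M a x)) by (apply Rmult_lt_0_compat; lra). nra.
Qed.

End G2.

Section P.
Variables (M a Q : R).
Hypotheses (hM : 0 < M) (ha0 : 0 <= a) (haM : a < M) (hQ : 0 <= Q).

Lemma FF_nonneg x : rplus M a <= x -> 0 <= FF M a Q x.
Proof.
  intros Hx. destruct (Req_dec x (rplus M a)) as [E|E].
  - subst. rewrite FF_rp; lra.
  - apply Rlt_le, FF_pos; lra.
Qed.

Lemma Kk_neg x : 0 < x -> Kk M a Q x < 0.
Proof.
  intros Hx. unfold Kk.
  assert (0 < x ^ 8) by (apply pow_lt; lra).
  assert (0 <= a ^ 2) by apply pow2_ge_0.
  assert (0 <= a ^ 4) by (replace (a ^ 4) with ((a ^ 2) ^ 2) by ring; apply pow2_ge_0).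
  assert (0 <= a ^ 6) by (replace (a ^ 6) with ((a ^ 3) ^ 2) by ring; apply pow2_ge_0).
  assert (0 < x ^ 6) by (apply pow_lt; lra).
  assert (0 < x ^ 5) by (apply pow_lt; lra).
  assert (0 < x ^ 4) by (apply pow_lt; lra).
  assert (0 < x ^ 3) by (apply pow_lt; lra).
  assert (0 < x ^ 2) by (apply pow_lt; lra).
  assert (0 < (1 + Q) * x ^ 8) by (apply Rmult_lt_0_compat; lra).
  assert (0 <= (1 + 3 * Q) * a ^ 2 * x ^ 6) by (repeat apply Rmult_le_pos; lra).
  assert (0 <= 2 * (1 + Q) * M * a ^ 2 * x ^ 5) by (repeat apply Rmult_le_pos; lra).
  assert (0 <= 3 * Q * a ^ 4 * x ^ 4) by (repeat apply Rmult_le_pos; lra).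
  assert (0 <= 4 * Q * M * a ^ 4 * x ^ 3) by (repeat apply Rmult_le_pos; lra).
  assert (0 <= Q * a ^ 6 * x ^ 2) by (repeat apply Rmult_le_pos; lra).
  assert (0 <= 2 * Q * M * a ^ 6 * x) by (repeat apply Rmult_le_pos; lra).
  lra.
Qed.

Lemma prod_sign x : rplus M a <= x ->
  (Gg M a Q x < 0 -> phip M a Q x * phim M a Q x < 0) /\
  (0 < Gg M a Q x -> 0 < phip M a Q x * phim M a Q x).
Proof.
  intros Hx. destruct (rp_facts M a ha0 haM) as [H1 [H2 H3]].
  assert (HD : 0 < Vden M a x) by (apply Vden_pos; lra).
  rewrite prod_id; [| apply FF_nonneg; lra | lra].
  pose proof (Kk_neg x ltac:(lra)) as HK.
  split; intros HG.
  - unfold Rdiv. assert (0 < / Vden M a x) by (apply Rinv_0_lt_compat; lra).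
    assert (0 < Kk M a Q x * Gg M a Q x) by nra. nra.
  - unfold Rdiv. assert (0 < / Vden M a x) by (apply Rinv_0_lt_compat; lra).
    assert (Kk M a Q x * Gg M a Q x < 0) by nra. nra.
Qed.

Lemma sum_neg x : 0 < a -> rplus M a < x -> phip M a Q x + phim M a Q x < 0.
Proof.
  intros ha Hx. destruct (rp_facts M a ha0 haM) as [H1 [H2 H3]].
  assert (HD : 0 < Vden M a x) by (apply Vden_pos; lra).
  rewrite sum_id; [|lra].
  assert (0 < Vroot M a Q x) by (rewrite Vroot_FF; apply sqrt_lt_R0, FF_pos; lra).
  assert (0 < al M a x).
  { unfold al. assert (0 < x ^ 2) by (apply pow_lt; lra).
    assert (0 < 3 * x ^ 2 + a ^ 2) by (assert (0 <= a ^ 2) by apply pow2_ge_0; lra).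
    repeat apply Rmult_lt_0_compat; lra. }
  assert (0 < 2 * al M a x * Vroot M a Q x / Vden M a x).
  { unfold Rdiv. apply Rmult_lt_0_compat; [|apply Rinv_0_lt_compat; lra].
    apply Rmult_lt_0_compat; [apply Rmult_lt_0_compat|]; lra. }
  lra.
Qed.

Lemma phip_rp : 0 < phip M a Q (rplus M a).
Proof.
  destruct (rp_facts M a ha0 haM) as [H1 [H2 H3]].
  set (r := rplus M a) in *.
  assert (HD : 0 < Vden M a r) by (apply Vden_pos; lra).
  assert (E : phip M a Q r = (Cc M a Q r * Vden M a r - 2 * M * a * r * al M a r) / Vden M a r).
  { assert (HF : FF M a Q r = 0) by (unfold r; apply FF_rp; lra).
    unfold phip, Vplus. rewrite Vroot_FF, HF, sqrt_0.
    field. lra. }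
  assert (E2 : Cc M a Q r * Vden M a r - 2 * M * a * r * al M a r =
     (r ^ 2 + a ^ 2) ^ 2 * 2 * (r - M) * (r ^ 4 + Q * (r ^ 2 + a ^ 2) ^ 2)
     + Defs.Delta M a r * (-4 * r ^ 7 * Q - 4 * r ^ 7 - 10 * r ^ 5 * a ^ 2 * Q - 2 * r ^ 5 * a ^ 2
        - 6 * r ^ 4 * M * a ^ 2 * Q + 6 * r ^ 4 * M * a ^ 2 - 8 * r ^ 3 * a ^ 4 * Q
        - 4 * r ^ 2 * M * a ^ 4 * Q - 2 * r * a ^ 6 * Q + 2 * M * a ^ 6 * Q)).
  { unfold Cc, Vden, al, Dn1, Defs.Delta. ring. }
  rewrite E, E2, H3. rewrite Rmult_0_l, Rplus_0_r.
  unfold Rdiv. apply Rmult_lt_0_compat; [|apply Rinv_0_lt_compat; lra].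
  assert (0 < r ^ 2 + a ^ 2) by (assert (0 < r ^ 2) by (apply pow_lt; lra); assert (0 <= a ^ 2) by apply pow2_ge_0; lra).
  assert (0 < (r ^ 2 + a ^ 2) ^ 2) by (apply pow_lt; lra).
  assert (0 < r ^ 4) by (apply pow_lt; lra).
  assert (0 <= Q * (r ^ 2 + a ^ 2) ^ 2) by (apply Rmult_le_pos; lra).
  repeat apply Rmult_lt_0_compat; lra.
Qed.

Lemma Cc_4M : Cc M a Q (4 * M) < 0.
Proof.
  assert (E : Cc M a Q (4 * M) = a ^ 2 * (256 * M ^ 3 + 10 * M * a ^ 2)
      - (1 + Q) * (512 * M ^ 5 + 192 * a ^ 2 * M ^ 3 + 10 * a ^ 4 * M)) by (unfold Cc, Dn1, Vden, Defs.Delta; ring).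
  rewrite E.
  assert (0 <= a ^ 2) by apply pow2_ge_0.
  assert (a ^ 2 < M ^ 2) by (simpl; nra).
  assert (0 < M ^ 3) by (apply pow_lt; lra).
  assert (0 < M ^ 5) by (apply pow_lt; lra).
  assert (0 <= a ^ 4) by (replace (a ^ 4) with ((a ^ 2) ^ 2) by ring; apply pow2_ge_0).
  assert (0 <= Q * (512 * M ^ 5 + 192 * a ^ 2 * M ^ 3 + 10 * a ^ 4 * M)).
  { apply Rmult_le_pos; [lra|].
    assert (0 <= a ^ 2 * M ^ 3) by (apply Rmult_le_pos; lra).
    assert (0 <= a ^ 4 * M) by (apply Rmult_le_pos; lra). lra. }
  assert (a ^ 2 * M ^ 3 <= M ^ 2 * M ^ 3) by (apply Rmult_le_compat_r; lra).
  assert (E2 : M ^ 2 * M ^ 3 = M ^ 5) by ring.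
  assert (E3 : a ^ 2 * (256 * M ^ 3 + 10 * M * a ^ 2)
      - (1 + Q) * (512 * M ^ 5 + 192 * a ^ 2 * M ^ 3 + 10 * a ^ 4 * M)
      = 64 * (a ^ 2 * M ^ 3) - 512 * M ^ 5 - Q * (512 * M ^ 5 + 192 * a ^ 2 * M ^ 3 + 10 * a ^ 4 * M)) by ring.
  rewrite E3. lra.
Qed.

Lemma phip_4M : phip M a Q (4 * M) < 0.
Proof.
  pose proof Cc_4M.
  assert (HD : 0 < Vden M a (4 * M)) by (apply Vden_pos; lra).
  assert (0 <= Vplus M a Q (4 * M)).
  { unfold Vplus. unfold Rdiv. apply Rmult_le_pos; [|apply Rlt_le, Rinv_0_lt_compat; lra].
    rewrite Vroot_FF. pose proof (sqrt_pos (FF M a Q (4 * M))).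
    assert (0 <= 2 * M * a * (4 * M)) by (repeat apply Rmult_le_pos; lra). lra. }
  assert (0 <= al M a (4 * M)).
  { unfold al. assert (0 <= (4 * M) ^ 2) by apply pow2_ge_0.
    assert (0 <= 3 * (4 * M) ^ 2 + a ^ 2) by (assert (0 <= a ^ 2) by apply pow2_ge_0; lra).
    repeat apply Rmult_le_pos; lra. }
  unfold phip. assert (0 <= al M a (4 * M) * Vplus M a Q (4 * M)) by (apply Rmult_le_pos; lra).
  lra.
Qed.

Lemma cont_phip x : rplus M a <= x -> continuity_pt (phip M a Q) x.
Proof.
  intros Hx. destruct (rp_facts M a ha0 haM) as [H1 [H2 H3]].
  assert (HD : 0 < Vden M a x) by (apply Vden_pos; lra).
  unfold phip, Vplus.
  apply continuity_pt_minus.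
  - unfold Cc, Dn1, Vden, Defs.Delta. reg.
  - apply continuity_pt_mult.
    + unfold al. reg.
    + apply continuity_pt_div.
      * apply continuity_pt_plus; [reg|].
        unfold Vroot. apply (continuity_pt_comp (fun r => FF M a Q r) sqrt).
        -- unfold FF, Defs.Delta. reg.
        -- apply continuity_pt_sqrt. apply FF_nonneg; lra.
      * unfold Vden. reg.
      * lra.
Qed.

End P.

Section Fin.
Variables (M a Q : R).
Hypotheses (hM : 0 < M) (ha0 : 0 <= a) (haM : a < M) (hQ : 0 <= Q).

Lemma dVplus x : rplus M a < x ->
  derivable_pt_lim (fun s => Vplus M a Q s) x (phip M a Q x / (2 * Vroot M a Q x * Vden M a x)).
Proof.
  intros Hx. destruct (rp_facts M a ha0 haM) as [H1 [H2 H3]].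
  assert (HD : 0 < Vden M a x) by (apply Vden_pos; lra).
  pose proof (deriv_pm M a Q x 1 (or_introl eq_refl) (FF_pos M a Q hM ha0 haM hQ x Hx) ltac:(lra)) as D.
  apply is_derive_Reals in D. apply is_derive_Reals.
  replace (phip M a Q x / (2 * Vroot M a Q x * Vden M a x)) with
    ((1 * Cc M a Q x - 1 * al M a x * ((2 * M * a * x + 1 * Vroot M a Q x) / Vden M a x)) /
       (2 * Vroot M a Q x * Vden M a x)) by (unfold phip, Vplus, Rdiv; ring).
  assert (Hext : forall t, (2 * M * a * t + 1 * Vroot M a Q t) / Vden M a t = Vplus M a Q t)
    by (intro t; unfold Vplus, Rdiv; ring).
  exact (is_derive_ext _ _ x _ Hext D).
Qed.

Lemma dVminus x : rplus M a < x ->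
  derivable_pt_lim (fun s => Vminus M a Q s) x (phim M a Q x / (2 * Vroot M a Q x * Vden M a x)).
Proof.
  intros Hx. destruct (rp_facts M a ha0 haM) as [H1 [H2 H3]].
  assert (HD : 0 < Vden M a x) by (apply Vden_pos; lra).
  pose proof (deriv_pm M a Q x (-1) (or_intror eq_refl) (FF_pos M a Q hM ha0 haM hQ x Hx) ltac:(lra)) as D.
  apply is_derive_Reals in D. apply is_derive_Reals.
  replace (phim M a Q x / (2 * Vroot M a Q x * Vden M a x)) with
    ((-1 * Cc M a Q x - -1 * al M a x * ((2 * M * a * x + -1 * Vroot M a Q x) / Vden M a x)) /
       (2 * Vroot M a Q x * Vden M a x)) by (unfold phim, Vminus, Rdiv; ring).
  assert (Hext : forall t, (2 * M * a * t + -1 * Vroot M a Q t) / Vden M a t = Vminus M a Q t)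
    by (intro t; unfold Vminus, Rdiv; ring).
  exact (is_derive_ext _ _ x _ Hext D).
Qed.

Lemma den_pos x : rplus M a < x -> 0 < 2 * Vroot M a Q x * Vden M a x.
Proof.
  intros Hx. destruct (rp_facts M a ha0 haM) as [H1 [H2 H3]].
  assert (HD : 0 < Vden M a x) by (apply Vden_pos; lra).
  assert (0 < Vroot M a Q x) by (rewrite Vroot_FF; apply sqrt_lt_R0, FF_pos; lra).
  apply Rmult_lt_0_compat; lra.
Qed.

Lemma div_pos u t : 0 < t -> 0 < u -> 0 < u / t.
Proof. intros. unfold Rdiv. apply Rmult_lt_0_compat; [lra| apply Rinv_0_lt_compat; lra]. Qed.
Lemma div_neg u t : 0 < t -> u < 0 -> u / t < 0.
Proof. intros. assert (0 < (- u) / t) by (apply div_pos; lra). unfold Rdiv in *. lra. Qed.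

End Fin.

Lemma main_pos M a Q (hM : 0 < M) (ha : 0 < a) (haM : a < M) (hQ : 0 <= Q) :
    (exists! r : R, local_extremum_on (fun s => Vplus M a Q s) (rplus M a) r) /\
    (exists! r : R, local_extremum_on (fun s => Vminus M a Q s) (rplus M a) r).
Proof.
  assert (ha0 : 0 <= a) by lra.
  destruct (rp_facts M a ha0 haM) as [H1 [H2 H3]].
  destruct (G_struct M a Q hM ha haM hQ) as [c1 [c2 [Hc1 [Hc12 [Hc2 [GL [GM GR]]]]]]].
  pose proof (prod_sign M a Q hM ha0 haM hQ) as PS.
  pose proof (sum_neg M a Q hM ha0 haM hQ) as SN.
  pose proof (cont_phip M a Q hM ha0 haM hQ) as CP.
  pose proof (phip_rp M a Q hM ha0 haM hQ) as P0.
  pose proof (phip_4M M a Q hM ha0 haM hQ) as P4.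
  assert (L : forall x, (rplus M a) < x < c1 -> 0 < phip M a Q x).
  { intros x Hx. destruct (Rlt_le_dec 0 (phip M a Q x)) as [Hp|Hp]; [exact Hp| exfalso].
    assert (Hpr : phip M a Q x * phim M a Q x < 0) by (apply PS; [lra| apply GL; lra]).
    assert (Hn : phip M a Q x < 0).
    { destruct (Req_dec (phip M a Q x) 0) as [E|E]; [rewrite E in Hpr; lra| lra]. }
    destruct (Ranalysis5.IVT_interv (fun r => - phip M a Q r) (rplus M a) x) as [z [Hz Ez]].
    { intros z Hz. apply continuity_pt_opp, CP; lra. } { lra. } { lra. } { lra. }
    assert (Ez' : phip M a Q z = 0) by lra.
    assert (phip M a Q z * phim M a Q z < 0) by (apply PS; [lra| apply GL; lra]).
    rewrite Ez' in H. lra. }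
  assert (R : forall x, c2 < x -> phip M a Q x < 0).
  { intros x Hx. destruct (Rlt_le_dec (phip M a Q x) 0) as [Hp|Hp]; [exact Hp| exfalso].
    assert (Hpr : phip M a Q x * phim M a Q x < 0) by (apply PS; [lra| apply GR; lra]).
    assert (Hn : 0 < phip M a Q x).
    { destruct (Req_dec (phip M a Q x) 0) as [E|E]; [rewrite E in Hpr; lra| lra]. }
    assert (Hz : exists z, c2 < z /\ phip M a Q z = 0).
    { destruct (Rtotal_order x (4 * M)) as [Hl|[He|Hg]].
      - destruct (Ranalysis5.IVT_interv (fun r => - phip M a Q r) x (4 * M)) as [z [Hz Ez]].
        { intros z Hz. apply continuity_pt_opp, CP; lra. } { lra. } { lra. } { lra. }
        exists z. split; lra.
      - rewrite He in Hn. lra.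
      - destruct (Ranalysis5.IVT_interv (fun r => phip M a Q r) (4 * M) x) as [z [Hz Ez]].
        { intros z Hz. apply CP; lra. } { lra. } { lra. } { lra. }
        exists z. split; lra. }
    destruct Hz as [z [Hz Ez]].
    assert (phip M a Q z * phim M a Q z < 0) by (apply PS; [lra| apply GR; lra]).
    rewrite Ez in H. lra. }
  assert (Mid : forall x, c1 < x < c2 -> phip M a Q x < 0 /\ phim M a Q x < 0).
  { intros x Hx.
    assert (Hpr : 0 < phip M a Q x * phim M a Q x) by (apply PS; [lra| apply GM; lra]).
    assert (Hs : phip M a Q x + phim M a Q x < 0) by (apply SN; lra).
    destruct (Rlt_le_dec (phip M a Q x) 0); destruct (Rlt_le_dec (phim M a Q x) 0); try (split; assumption);
      exfalso; nra. }
  assert (Lm : forall x, (rplus M a) < x < c1 -> phim M a Q x < 0).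
  { intros x Hx. pose proof (L x Hx).
    assert (Hpr : phip M a Q x * phim M a Q x < 0) by (apply PS; [lra| apply GL; lra]).
    destruct (Rlt_le_dec (phim M a Q x) 0); [assumption| exfalso; nra]. }
  assert (Rm : forall x, c2 < x -> 0 < phim M a Q x).
  { intros x Hx. pose proof (R x Hx).
    assert (Hpr : phip M a Q x * phim M a Q x < 0) by (apply PS; [lra| apply GR; lra]).
    destruct (Rlt_le_dec 0 (phim M a Q x)); [assumption| exfalso; nra]. }
  split.
  - apply (uniq_ext (fun s => Vplus M a Q s)
      (fun x => phip M a Q x / (2 * Vroot M a Q x * Vden M a x)) (rplus M a) c1 c2); [lra| | |].
    + intros x Hx. apply dVplus; auto.
    + intros x Hx1 Hx2 _. apply div_pos; [apply den_pos; auto| apply L; lra].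
    + intros x Hx Hxd. apply div_neg; [apply den_pos; auto; lra|].
      destruct (Rtotal_order x c2) as [Hl|[He|Hg]]; [apply Mid; lra| contradiction| apply R; lra].
  - apply (uniq_ext_neg (fun s => Vminus M a Q s)
      (fun x => phim M a Q x / (2 * Vroot M a Q x * Vden M a x)) (rplus M a) c2 c1); [lra| | |].
    + intros x Hx. apply dVminus; auto.
    + intros x Hx1 Hx2 Hxd. apply div_neg; [apply den_pos; auto|].
      destruct (Rtotal_order x c1) as [Hl|[He|Hg]]; [apply Lm; lra| contradiction| apply Mid; lra].
    + intros x Hx _. apply div_pos; [apply den_pos; auto; lra| apply Rm; lra].
Qed.

Lemma main_zero M Q (hM : 0 < M) (hQ : 0 <= Q) :
    (exists! r : R, local_extremum_on (fun s => Vplus M 0 Q s) (rplus M 0) r) /\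
    (exists! r : R, local_extremum_on (fun s => Vminus M 0 Q s) (rplus M 0) r).
Proof.
  assert (ha0 : 0 <= 0) by lra. assert (haM : 0 < M) by lra.
  destruct (rp_facts M 0 ha0 haM) as [H1 [H2 H3]].
  assert (Ep : forall x, phip M 0 Q x = (1 + Q) * x ^ 4 * (6 * M - 2 * x)).
  { intros x. unfold phip, Cc, al, Dn1, Vden, Defs.Delta. ring. }
  assert (Em : forall x, phim M 0 Q x = - ((1 + Q) * x ^ 4 * (6 * M - 2 * x))).
  { intros x. unfold phim, Cc, al, Dn1, Vden, Defs.Delta. ring. }
  assert (Pos : forall x, 0 < x -> 0 < (1 + Q) * x ^ 4) by (intros x Hx; apply Rmult_lt_0_compat; [lra| apply pow_lt; lra]).
  split.
  - apply (uniq_ext (fun s => Vplus M 0 Q s)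
      (fun x => phip M 0 Q x / (2 * Vroot M 0 Q x * Vden M 0 x)) (rplus M 0) (3 * M) (3 * M)); [lra| | |].
    + intros x Hx. apply dVplus; auto.
    + intros x Hx1 Hx2 _. apply div_pos; [apply den_pos; auto|].
      rewrite Ep. apply Rmult_lt_0_compat; [apply Pos; lra| lra].
    + intros x Hx _. apply div_neg; [apply den_pos; auto; lra|].
      rewrite Ep. assert (0 < (1 + Q) * x ^ 4 * (2 * x - 6 * M)) by (apply Rmult_lt_0_compat; [apply Pos; lra| lra]). lra.
  - apply (uniq_ext_neg (fun s => Vminus M 0 Q s)
      (fun x => phim M 0 Q x / (2 * Vroot M 0 Q x * Vden M 0 x)) (rplus M 0) (3 * M) (3 * M)); [lra| | |].
    + intros x Hx. apply dVminus; auto.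
    + intros x Hx1 Hx2 _. apply div_neg; [apply den_pos; auto|].
      rewrite Em. assert (0 < (1 + Q) * x ^ 4 * (6 * M - 2 * x)) by (apply Rmult_lt_0_compat; [apply Pos; lra| lra]). lra.
    + intros x Hx _. apply div_pos; [apply den_pos; auto; lra|].
      rewrite Em. assert (0 < (1 + Q) * x ^ 4 * (2 * x - 6 * M)) by (apply Rmult_lt_0_compat; [apply Pos; lra| lra]). lra.
Qed.

Theorem lemma2 (M a : R) (hM : 0 < M) (ha0 : 0 <= a) (haM : a < M) :
  forall Q : R, 0 <= Q ->
    (exists! r : R, local_extremum_on (fun s => Vplus M a Q s) (rplus M a) r) /\
    (exists! r : R, local_extremum_on (fun s => Vminus M a Q s) (rplus M a) r).
Proof.
  intros Q hQ. destruct (Req_dec a 0) as [E|E].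
  - subst a. apply main_zero; auto.
  - apply main_pos; auto. lra.
Qed.
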